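(* Let $k\ge1$ and $n$ be integers. Any two cycles of $G(n,k)$ are contiguous translates of each other: if $C_1,C_2$ are cycles of $G(n,k)$, then after possibly interchanging $C_1$ and $C_2$ there is an integer $d\ge0$ such that $C_2=C_1+d$ and $C_1+\alpha$ is a cycle of $G(n,k)$ for every integer $0\le\alpha\le d$. In particular, all cycles of $G(n,k)$ have the same length.
   Context: For an integer $\ell$, $\ell_k$ and $\ell_{k+1}$ denote the least nonnegative residues of $\ell$ modulo $k$ and $k+1$. $G(n,k)$ is the directed graph on vertices $0,1,\dots,k$ whose edges are exactly the $k$ edges $(i+n-2)_{k+1}\to(i+n-1)_k$, $1\le i\le k$; an edge $a\to a$ is a loop, counted as a cycle of length $1$. Every vertex other than $k$ and $(n-2)_{k+1}$ has in- and out-degree $1$, so $G(n,k)$ is a disjoint union of directed cycles together with one directed path (the tail) from $k$ to $(n-2)_{k+1}$. For a cycle $C: a_1\to\cdots\to a_\ell\to a_1$ and an integer $t$, $C+t$ denotes the closed walk $(a_1+t)_{k+1}\to\cdots\to(a_\ell+t)_{k+1}\to(a_1+t)_{k+1}$, and one says ''$C+t$ is a cycle'' when this is a cycle of $G(n,k)$. The length of a cycle is its number of edges. *)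

(* Defs.v *)
From mathcomp Require Import all_boot all_order all_algebra.
Set Implicit Arguments. Unset Strict Implicit. Unset Printing Implicit Defensive.
Import Order.TTheory GRing.Theory Num.Theory.
Local Open Scope ring_scope.

(* Vertices of G(n,k) are the integers 0..k (as ints); least nonnegative
   residues are computed with intdiv's modz. *)

Definition Gedge (n : int) (k : nat) (a b : int) : bool :=
  [exists j : 'I_k,
     (a == ((j.+1%:Z + n - 2) %% k.+1%:Z)%Z) &&
     (b == ((j.+1%:Z + n - 1) %% k%:Z)%Z)].

Definition is_Gcycle (n : int) (k : nat) (c : seq int) : Prop :=
  [/\ c != [::], uniq c & cycle (Gedge n k) c].

Definition cshift (k : nat) (t : int) (c : seq int) : seq int :=
  map (fun a => ((a + t) %% k.+1%:Z)%Z) c.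

Definition same_cycle (c1 c2 : seq int) : Prop :=
  exists r : nat, c2 = rot r c1.

(* Main.v *)
Require Import Defs.
From mathcomp Require Import all_boot all_order all_algebra zify.
Set Implicit Arguments. Unset Strict Implicit. Unset Printing Implicit Defensive.
Import Order.TTheory GRing.Theory Num.Theory.
Local Open Scope ring_scope.

Lemma modz_char (x r m q : int) : 0 < m -> 0 <= r < m -> x = r + q * m -> (x %% m)%Z = r.
Proof. move=> hm hr ->. rewrite addrC modzMDl. exact: modz_small. Qed.

Lemma zero_win (c m : int) : 0 < m -> - m < c * m < m -> c = 0.
Proof.
move=> hm h. case: (ltrgtP c 0) => // hc.
- have : c * m <= - m. have : c <= -1 by lia. nia. lia.
- have : m <= c * m. nia. lia.
Qed.

Lemma modz_win (x y m : int) : 0 < m -> (x %% m)%Z = (y %% m)%Z -> - m < x - y < m -> x = y.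
Proof.
move=> hm e h. have ex := divz_eq x m. have ey := divz_eq y m.
move: ex ey h; rewrite e. set r := (y %% m)%Z. set a := (x %/ m)%Z. set b := (y %/ m)%Z.
move=> ex ey h.
have hab : x - y = (a - b) * m by rewrite ex ey mulrBl; lia.
rewrite hab in h. have := zero_win hm h. lia.
Qed.

Section G.
Variables (n : int) (k : nat).
Hypothesis hk : (1 <= k)%N.

Definition md (x : int) := (x %% k.+1%:Z)%Z.
Definition jj (a : int) := md (a - (n - 1)).
Definition f (a : int) := ((jj a + (n - 1) + 1) %% k%:Z)%Z.

Lemma md_bnd x : 0 <= md x <= k%:Z.
Proof. rewrite /md; lia. Qed.

Lemma f_bnd x : 0 <= f x < k%:Z.
Proof. rewrite /f; lia. Qed.

Lemma md_id x : 0 <= x <= k%:Z -> md x = x.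
Proof. move=> h; rewrite /md modz_small //; lia. Qed.

Lemma mdDml x y : md (md x + y) = md (x + y).
Proof. by rewrite /md modzDml. Qed.

Lemma edgeP a b : Gedge n k a b <-> [/\ 0 <= a <= k%:Z, jj a < k%:Z & b = f a].
Proof.
split.
- case/existsP => j /andP [/eqP -> /eqP ->].
  have hj : jj (md (j.+1%:Z + n - 2)) = j%:Z.
    rewrite /jj mdDml md_id; last by have := ltn_ord j; lia.
    lia.
  split; first exact: md_bnd.
  + rewrite hj; have := ltn_ord j; lia.
  + rewrite /f hj. congr (_ %% _)%Z. lia.
- case=> ha hj ->. rewrite /Gedge. apply/existsP.
  have hj0 : 0 <= jj a by case/andP: (md_bnd (a - (n - 1))).
  have hjk : (`|jj a| < k)%N by lia.
  exists (Ordinal hjk). apply/andP; split; apply/eqP => /=.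
  + have -> : (`|jj a|.+1%:Z + n - 2) = jj a + (n - 1) by lia.
    by rewrite /jj /md modzDml subrK modz_small //; lia.
  + rewrite /f. congr (_ %% _)%Z. lia.
Qed.


Lemma jj_bnd x : 0 <= jj x <= k%:Z.
Proof. exact: md_bnd. Qed.

Lemma jj_inj a b : 0 <= a <= k%:Z -> 0 <= b <= k%:Z -> jj a = jj b -> a = b.
Proof.
move=> ha hb e.
have := @modz_win (a - (n - 1)) (b - (n - 1)) (k.+1%:Z).
rewrite /jj /md in e. move=> /(_ _ e) h. suff: a - (n - 1) = b - (n - 1) by lia.
apply: h; lia.
Qed.

Lemma f_inj a b : 0 <= a <= k%:Z -> 0 <= b <= k%:Z -> jj a < k%:Z -> jj b < k%:Z ->
  f a = f b -> a = b.
Proof.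
move=> ha hb ja jb e. apply: jj_inj => //.
have h0a := jj_bnd a. have h0b := jj_bnd b.
have := @modz_win (jj a + (n - 1) + 1) (jj b + (n - 1) + 1) (k%:Z).
rewrite /f in e. move=> /(_ _ e) h. suff: jj a + (n - 1) + 1 = jj b + (n - 1) + 1 by lia.
apply: h; lia.
Qed.

Lemma jj_pred x : jj (md (x - 1)) = md (jj x - 1).
Proof. rewrite /jj /md !modzDml. congr (_ %% _)%Z. lia. Qed.

Lemma f_pred x : jj x != 0 -> jj x < k%:Z -> f (md (x - 1)) = ((f x - 1) %% k%:Z)%Z.
Proof.
move=> j0 jk. have hb := jj_bnd x.
rewrite /f jj_pred (md_id (x := jj x - 1)); last lia.
rewrite modzDml. congr (_ %% _)%Z. lia.
Qed.

Lemma mdm1_small x : 0 < x <= k%:Z -> md (x - 1) = x - 1.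
Proof. move=> h; apply: md_id; lia. Qed.

Lemma modk_m1_small x : 0 < x < k%:Z -> ((x - 1) %% k%:Z)%Z = x - 1.
Proof. move=> h; rewrite modz_small //; lia. Qed.

Definition cyc C := is_Gcycle n k C.

Lemma cyc_mem C x : cyc C -> x \in C ->
  [/\ 0 <= x < k%:Z, jj x < k%:Z, f x \in C & next C x = f x].
Proof.
case=> nn uC cC xC.
have /edgeP [hx hj hn] := next_cycle cC xC.
have /edgeP [_ _ hp] := prev_cycle cC xC.
have := f_bnd (prev C x). rewrite -hp => hb.
split => //; last by rewrite -hn mem_next.
Qed.

Lemma cyc_rot C r : cyc (rot r C) <-> cyc C.
Proof.
rewrite /cyc /is_Gcycle rot_uniq rot_cycle.
have -> : (rot r C != [::]) = (C != [::]).
  by rewrite -!size_eq0 size_rot.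
by [].
Qed.

Lemma rot_rot_ex (T : Type) a b (s : seq T) : exists r, rot a (rot b s) = rot r s.
Proof.
rewrite (rot_minn b) (rot_minn a) size_rot.
eexists; apply: rot_add_mod; exact: geq_minr.
Qed.

Lemma cyc_traject C x : cyc C -> x \in C ->
  exists i, rot i C = traject f x (size C) /\ iter (size C) f x = x.
Proof.
move=> hC xC. case: (rot_to xC) => i c' e. exists i.
have hC' : cyc (rot i C) by apply/cyc_rot.
case: hC' => _ _. rewrite e /= rcons_path => /andP [pc lc].
have fp : fpath f x c'.
  apply: (sub_path _ pc) => a b /edgeP [_ _ ->]; exact: eqxx.
have ec := fpathE fp.
have sz : size C = (size c').+1 by rewrite -(size_rot i) e.
rewrite sz /=. split; first by rewrite {1}ec.
have hl : last x c' = iter (size c') f x by rewrite {1}ec last_traject.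
rewrite -hl. by case/edgeP: lc => _ _ <-.
Qed.

Lemma same_vertex C D x : cyc C -> cyc D -> x \in C -> x \in D -> same_cycle C D.
Proof.
move=> hC hD xC xD.
case: (cyc_traject hC xC) => i [ei ii]. case: (cyc_traject hD xD) => j [ej ij].
have uC : uniq (traject f x (size C)) by rewrite -ei rot_uniq; case: hC.
have uD : uniq (traject f x (size D)) by rewrite -ej rot_uniq; case: hD.
have hsz : forall m m', uniq (traject f x m') -> iter m f x = x -> (0 < m)%N -> (m' <= m)%N.
  move=> m m' u im m0. rewrite leqNgt; apply/negP => lt.
  have := nth_uniq x (i := 0) (j := m) _ _ u.
  rewrite size_traject !nth_traject //; last exact: leq_ltn_trans lt.
  rewrite im eqxx => /(_ (leq_ltn_trans (leq0n _) lt) lt) /esym /eqP.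
  by case: m m0 {im lt}.
have p0 : forall E, cyc E -> (0 < size E)%N.
  by move=> E [nn _ _]; rewrite lt0n size_eq0.
have es : size C = size D.
  apply/eqP; rewrite eqn_leq; apply/andP; split.
  - exact: hsz uC ij (p0 _ hD).
  - exact: hsz uD ii (p0 _ hC).
rewrite -es in ej.
have : D = rotr j (rot i C) by rewrite ei -ej rotK.
rewrite /rotr. case: (rot_rot_ex (size (rot i C) - j) i C) => r ->.
by exists r.
Qed.

Lemma same_cycle_sym C D : same_cycle C D -> same_cycle D C.
Proof.
case=> r ->. exists (size C - r)%N.
by rewrite -{1}(rotK r C) /rotr size_rot.
Qed.

Lemma cshift_comp a b C : cshift k a (cshift k b C) = cshift k (b + a) C.
Proof.
rewrite /cshift -map_comp. apply: eq_map => x /=. rewrite modzDml addrA //.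
Qed.

Lemma cshift0 C : all (fun x => 0 <= x <= k%:Z) C -> cshift k 0 C = C.
Proof.
move=> /allP h. rewrite /cshift -[RHS]map_id. apply/eq_in_map => x /h hx /=.
rewrite addr0 modz_small //; lia.
Qed.

Lemma cyc_vert C : cyc C -> all (fun x => 0 <= x <= k%:Z) C.
Proof. move=> hC; apply/allP => x xC. case: (cyc_mem hC xC) => h _ _ _; lia. Qed.

Lemma shift_down C : cyc C -> (forall x, x \in C -> x != 0 /\ jj x != 0) ->
  cyc (cshift k (-1) C).
Proof.
move=> hC h. have hC0 := hC. case: hC0 => nn uC cC. split.
- by rewrite -size_eq0 size_map size_eq0.
- rewrite map_inj_in_uniq // => x y xC yC /= e.
  case: (cyc_mem hC xC) => hx _ _ _. case: (cyc_mem hC yC) => hy _ _ _.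
  suff : x + -1 = y + -1 by lia.
  apply: (modz_win (m := k.+1%:Z)) => //; lia.
- rewrite cycle_map. apply: (sub_in_cycle (P := mem C)) cC; last by apply/allP.
  move=> x y xC yC /edgeP [hx hj ey] /=; subst y.
  case: (h x xC) => x0 jx0. case: (cyc_mem hC yC) => fy _ _ _.
  case: (h (f x) yC) => fx0 _.
  apply/edgeP; split.
  + exact: md_bnd.
  + rewrite -/(md (x - 1)) jj_pred md_id; have := jj_bnd x; lia.
  + rewrite -/(md (x - 1)) -/(md (f x - 1)) f_pred // modk_m1_small; last lia.
    rewrite mdm1_small //; lia.
Qed.

Lemma f_vert x : 0 <= f x <= k%:Z.
Proof. have := f_bnd x; lia. Qed.

Lemma bottom_uniq A B y : cyc A -> cyc B -> 0 \in A -> y \in B -> jj y = 0 -> y \in A.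
Proof.
move=> hA hB A0 yB jy.
case: (boolP (y \in A)) => // yA. exfalso.
have yv : 0 <= y <= k%:Z by case: (cyc_mem hB yB) => h _ _ _; lia.
pose p i := iter i f k%:Z.
have pv : forall i, 0 <= p i <= k%:Z.
  by case=> [|i]; [rewrite /p /=; lia | rewrite /p iterS; exact: f_vert].
have pS : forall i, p i.+1 = f (p i) by move=> i; rewrite /p iterS.
have Ajj : forall x, x \in A -> jj x != 0.
  move=> x xA; apply/eqP => jx. have xv : 0 <= x <= k%:Z.
    by case: (cyc_mem hA xA) => h _ _ _; lia.
  have exy : x = y by apply: jj_inj => //; rewrite jx jy.
  by move: yA; rewrite -exy xA.
have notcyc : forall C, cyc C -> forall i, (forall j, (j < i)%N -> jj (p j) < k%:Z) -> p i \notin C.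
  move=> C hC; elim=> [|i IH] hi.
  - apply/negP => kC. case: (cyc_mem hC kC) => h _ _ _. move: h; rewrite /p /=; lia.
  - apply/negP => pC. move/negP: (IH (fun j hj => hi j (ltnW hj))); apply.
    have pvC := mem_prev C (p i.+1). rewrite pC in pvC.
    case: (cyc_mem hC pvC) => hz jz _ nz. rewrite next_prev in nz; last by case: hC.
    have : prev C (p i.+1) = p i.
      apply: f_inj; [lia | exact: pv | exact: jz | exact: (hi i (ltnSn i)) | by rewrite -nz pS].
    by move=> <-.
have pB : forall i, (forall j, (j < i)%N -> jj (p j) < k%:Z) -> jj (p i) != 0.
  move=> i1 hi; apply/eqP => jp. have epy : p i1 = y by apply: jj_inj; [exact: pv | exact: yv | rewrite jp jy].
  by move: (notcyc B hB i1 hi); rewrite epy yB.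
pose m := size A.
pose a i := iter i f 0.
case: (cyc_traject hA A0) => i0 [ei0 im].
have aA : forall i, a i \in A by elim=> [|i IH] //; rewrite /a iterS; case: (cyc_mem hA IH).
have uA : uniq (traject f 0 m) by rewrite -ei0 rot_uniq; case: hA.
have a0 : forall i, (0 < i < m)%N -> a i != 0.
  move=> i /andP [hi0 im']. apply/eqP => ai.
  have hm0 : (0 < m)%N := leq_ltn_trans (leq0n i) im'.
  have := nth_uniq 0 (i := 0) (j := i) _ _ uA.
  rewrite size_traject !nth_traject // -/(a i) ai /= eqxx => /(_ hm0 im') /esym /eqP.
  by case: i hi0 {ai im'}.
have m0 : (0 < m)%N by rewrite /m lt0n size_eq0; case: hA.
have seg1 : forall i, (i < m)%N -> p i = md (a i - 1).
  elim=> [|i IH] hi.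
  - rewrite /p /a /=; symmetry; apply: (modz_char (q := -1)); lia.
  - rewrite pS IH; last exact: ltnW.
    case: (cyc_mem hA (aA i)) => _ ja _ _.
    rewrite f_pred //; last exact: Ajj.
    have -> : f (a i) = a i.+1 by rewrite /a iterS.
    case: (cyc_mem hA (aA i.+1)) => hai _ _ _.
    have ne : a i.+1 != 0 by apply: a0; rewrite ltn0Sn hi.
    rewrite modk_m1_small ?mdm1_small //; lia.
have pm : p m = k%:Z - 1.
  move: m0 seg1; case E: m => [|m'] // _ seg1.
  rewrite pS seg1 // .
  case: (cyc_mem hA (aA m')) => _ ja _ _.
  rewrite f_pred //; last exact: Ajj.
  have -> : f (a m') = 0 by rewrite /a -iterS -E im.
  apply: (modz_char (q := -1)); lia.
have aux : forall i, (forall j, (j < i)%N -> jj (p j) < k%:Z) -> p (m + i)%N = md (p i - 1).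
  elim=> [|i IH] hi.
  - rewrite addn0 pm /p /= md_id //; lia.
  - rewrite addnS pS IH; last by move=> j hj; apply: hi; exact: ltnW.
    have jpi := hi i (ltnSn i).
    rewrite f_pred //; last exact: pB (fun j hj => hi j (ltnW hj)).
    rewrite -pS.
    have ni := notcyc A hA i.+1 hi.
    have pn0 : p i.+1 != 0 by apply/eqP => e; move: ni; rewrite e A0.
    have := f_bnd (p i). rewrite -pS => hb.
    rewrite modk_m1_small ?mdm1_small //; lia.
have nos : forall i, jj (p i) < k%:Z.
  elim/ltn_ind => i IH.
  case: (ltnP i m) => him.
  - rewrite seg1 // jj_pred.
    have := Ajj _ (aA i). have := jj_bnd (a i) => hb hn.
    rewrite md_id; lia.
  - have -> : i = (m + (i - m))%N by rewrite subnKC.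
    have hi' : forall j, (j < i - m)%N -> jj (p j) < k%:Z.
      move=> j hj; apply: IH. apply: leq_trans hj _. exact: leq_subr.
    rewrite aux // jj_pred.
    have := pB _ hi'. have := jj_bnd (p (i - m)%N) => hb hn.
    rewrite md_id; lia.
have fin : forall t, p (t * m)%N = md (k%:Z - t%:Z).
  elim=> [|t IH].
  - rewrite mul0n /p /= md_id //; lia.
  - rewrite mulSn aux; last by move=> j _; exact: nos.
    rewrite IH /md modzDml. congr (_ %% _)%Z. lia.
pose s := md (n - 2).
have sv : 0 <= s <= k%:Z by exact: md_bnd.
have js : jj s = k%:Z.
  rewrite /jj /s /md modzDml. apply: (modz_char (q := -1)); lia.
have := fin `|k%:Z - s|%N.
have -> : md (k%:Z - `|k%:Z - s|%N%:Z) = s.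
  rewrite md_id; lia.
move=> e. have := nos (`|k%:Z - s|%N * m)%N. rewrite e js. lia.
Qed.

Lemma chain C : cyc C -> exists j C0,
  [/\ cyc C0, C = cshift k j%:Z C0, (forall al, (al <= j)%N -> cyc (cshift k al%:Z C0))
    & (0 \in C0) \/ (exists2 y, y \in C0 & jj y = 0)].
Proof.
move=> hC. have hV := cyc_vert hC.
have [x0 x0C] : exists x, x \in C.
  by case: hC => nn _ _; case: C nn {hV} => // x C' _; exists x; rewrite mem_head.
have hx0 := allP hV x0 x0C.
pose P j := has (fun x => (md (x - j%:Z) == 0) || (jj (md (x - j%:Z)) == 0)) C.
have exP : exists j, P j.
  exists `|x0|%N. apply/hasP; exists x0 => //. apply/orP; left.
  have -> : x0 - `|x0|%N%:Z = 0 by move: hx0 => /= ?; lia.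
  by rewrite /md mod0z.
case: (ex_minnP exP) => j Pj jmin.
have claim : forall al, (al <= j)%N -> cyc (cshift k (- al%:Z) C).
  elim=> [|al IH] hal.
  - by rewrite oppr0 cshift0.
  - have hal' : (al < j)%N := hal.
    have nP : ~~ P al by apply/negP => /jmin; rewrite leqNgt hal'.
    have -> : cshift k (- al.+1%:Z) C = cshift k (-1) (cshift k (- al%:Z) C).
      rewrite cshift_comp. congr cshift. lia.
    apply: shift_down; first exact: IH (ltnW hal).
    move=> z /mapP [x xC ->].
    move: nP; rewrite /P -all_predC => /allP /(_ x xC) /=.
    by rewrite negb_or => /andP [-> ->].
exists j, (cshift k (- j%:Z) C). split.
- exact: claim.
- by rewrite cshift_comp addNr cshift0.
- move=> al hal. rewrite cshift_comp.
  have -> : - j%:Z + al%:Z = - (j - al)%N%:Z by lia.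
  apply: claim; exact: leq_subr.
- move/hasP: Pj => [x xC] /orP [] /eqP e.
  + left. rewrite /cshift; apply/mapP. by exists x => //; rewrite -e.
  + right. exists (md (x - j%:Z)) => //. rewrite /cshift; apply/mapP. by exists x.
Qed.

Lemma final C1 C2 C0 D0 j i r : (j <= i)%N -> C1 = cshift k j%:Z C0 -> C2 = cshift k i%:Z D0 ->
  D0 = rot r C0 -> (forall al, (al <= i)%N -> cyc (cshift k al%:Z D0)) ->
  same_cycle (cshift k (i - j)%N%:Z C1) C2 /\
  (forall al, (al <= i - j)%N -> cyc (cshift k al%:Z C1)).
Proof.
move=> ji e1 e2 e3 hD. split.
- exists r. rewrite e2 e3 e1 cshift_comp /cshift map_rot. congr (rot r _).
  apply: eq_map => x /=. congr (_ %% _)%Z. congr (_ + _). lia.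
- move=> al hal. rewrite e1 cshift_comp.
  have := hD (j + al)%N. rewrite e3 /cshift map_rot -/(cshift k _ _) => /(_ _) /cyc_rot.
  move=> H. have hh : (j + al <= i)%N by rewrite -(subnKC ji) leq_add2l.
  move: (H hh). have -> : (j + al)%N%:Z = j%:Z + al%:Z by lia. done.
Qed.

End G.

Theorem theorem3p9 (n : int) (k : nat) (hk : (1 <= k)%N)
    (C1 C2 : seq int) :
  is_Gcycle n k C1 -> is_Gcycle n k C2 ->
  (exists (A B : seq int) (d : nat),
      ((A = C1 /\ B = C2) \/ (A = C2 /\ B = C1)) /\
      same_cycle (cshift k d%:Z A) B /\
      (forall alpha : nat, (alpha <= d)%N ->
          is_Gcycle n k (cshift k alpha%:Z A)))
  /\ size C1 = size C2.
Proof.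
move=> h1 h2.
case: (chain hk h1) => j [C0 [hC0 e1 hc1 b1]].
case: (chain hk h2) => i [D0 [hD0 e2 hc2 b2]].
have sc : same_cycle C0 D0.
  have vC := cyc_vert hk hC0. have vD := cyc_vert hk hD0.
  case: b1 => [c0 | [y yC jy]]; case: b2 => [d0 | [y' yD jy']].
  - exact (same_vertex hk hC0 hD0 c0 d0).
  - apply: (same_vertex hk hC0 hD0 _ yD). exact: (bottom_uniq hk hC0 hD0 c0 yD jy').
  - apply: (same_vertex hk hC0 hD0 yC). exact: (bottom_uniq hk hD0 hC0 d0 yC jy).
  - have eyy : y = y'.
      apply: (@jj_inj n k hk _ _ (allP vC y yC) (allP vD y' yD)); by rewrite jy jy'.
    subst y'. exact (same_vertex hk hC0 hD0 yC yD).
have ex : exists A B d, ((A = C1 /\ B = C2) \/ (A = C2 /\ B = C1)) /\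
      same_cycle (cshift k d%:Z A) B /\
      (forall alpha : nat, (alpha <= d)%N -> is_Gcycle n k (cshift k alpha%:Z A)).
  case: (leqP j i) => ji.
  - case: sc => r er.
    have [s1 s2] := final hk ji e1 e2 er hc2.
    by exists C1, C2, (i - j)%N; split; [left | split].
  - case: (same_cycle_sym sc) => r er.
    have [s1 s2] := final hk (ltnW ji) e2 e1 er hc1.
    by exists C2, C1, (j - i)%N; split; [right | split].
split => //.
case: ex => A [B [d [hAB [[r er] _]]]].
have : size A = size B by rewrite er size_rot size_map.
by case: hAB => [[-> ->] | [-> ->]].
Qed.
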